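(* Let $\mathfrak v$ be an irreducible $C(m)$-module and $\mathfrak n=\mathfrak v\oplus\mathbb R^m$ the associated Lie algebra of Heisenberg type. Then every proper $C^+(m)$-submodule of $\mathfrak v$ (i.e. one that is non-zero and different from $\mathfrak v$) is a Lagrangian subspace of $\mathfrak v$.
   Context: $C(m)$ is the real Clifford algebra of $\mathbb R^m$ with relations $z^2=-\langle z,z\rangle1$ and $C^+(m)$ its even subalgebra, generated by products of two elements of $\mathbb R^m$. $\mathfrak v$ carries an inner product making each $J_z$ skew-symmetric, and $\mathfrak n=\mathfrak v\oplus\mathbb R^m$ has $\mathbb R^m$ central and bracket $\langle z,[u,v]\rangle=(J_zu,v)$. A Lagrangian subspace is a subspace $\mathcal L\subset\mathfrak v$ with $[\mathcal L,\mathcal L]=0$ and $\dim\mathcal L=\frac12\dim\mathfrak v$. *)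

(* Defs.v *)
From mathcomp Require Import all_boot all_order all_algebra.
From mathcomp Require Import reals.
Set Implicit Arguments. Unset Strict Implicit. Unset Printing Implicit Defensive.
Import GRing.Theory Num.Theory.
Local Open Scope ring_scope.

(* The module v is modelled as R^n (row vectors 'rV[R]_n) with its standard
   inner product (u, v) = u *m v^T; every finite-dimensional real inner
   product space is isometric to such a space.  The Clifford action is given
   by matrices Jb i (the action of the i-th standard basis vector of R^m),
   acting on the right: J_z u := u *m Jz Jb z. *)

Section Defs.
Variables (R : realType) (m n : nat).

Definition Jz (Jb : 'I_m -> 'M[R]_n) (z : 'rV[R]_m) : 'M[R]_n :=
  \sum_(i < m) z 0 i *: Jb i.

Definition clifford_module (Jb : 'I_m -> 'M[R]_n) : Prop :=
  forall z : 'rV[R]_m,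
    Jz Jb z *m Jz Jb z = - ((z *m z^T) 0 0)%:M /\ (Jz Jb z)^T = - Jz Jb z.

(* Subspaces of v are represented by row spaces of square matrices. *)
Definition C_submodule (Jb : 'I_m -> 'M[R]_n) (W : 'M[R]_n) : Prop :=
  forall z : 'rV[R]_m, (W *m Jz Jb z <= W)%MS.

(* C^+(m) is generated by the products J_z J_w. *)
Definition Cplus_submodule (Jb : 'I_m -> 'M[R]_n) (W : 'M[R]_n) : Prop :=
  forall z w : 'rV[R]_m, (W *m (Jz Jb z *m Jz Jb w) <= W)%MS.

Definition irreducible_C_module (Jb : 'I_m -> 'M[R]_n) : Prop :=
  (0 < n)%N /\
  forall W : 'M[R]_n, C_submodule Jb W -> \rank W = 0%N \/ \rank W = n.

(* Bracket of n = v (+) R^m : <z,[u,v]> = (J_z u, v). *)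
Definition bracket_zero (Jb : 'I_m -> 'M[R]_n) (u v : 'rV[R]_n) : Prop :=
  forall z : 'rV[R]_m, (u *m Jz Jb z *m v^T) 0 0 = 0.

Definition lagrangian (Jb : 'I_m -> 'M[R]_n) (L : 'M[R]_n) : Prop :=
  (forall u v : 'rV[R]_n, (u <= L)%MS -> (v <= L)%MS -> bracket_zero Jb u v)
  /\ (\rank L).*2 = n.

End Defs.

(* Main.v *)
Require Import Defs.
From mathcomp Require Import all_boot all_order all_algebra.
From mathcomp Require Import reals.
From mathcomp Require Import complex ring lra.
Set Implicit Arguments. Unset Strict Implicit. Unset Printing Implicit Defensive.
Import Order.TTheory GRing.Theory Num.Theory.
Local Open Scope ring_scope.
Lemma sqnorm_eq0 (R : realFieldType) k (x : 'rV[R]_k) : (x *m x^T) 0 0 = 0 -> x = 0.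
Proof.
rewrite mxE => /eqP; rewrite psumr_eq0 => [/allP H|i _]; last first.
  by rewrite mxE -expr2 sqr_ge0.
apply/rowP => j; rewrite !mxE; have := H j (mem_index_enum _).
by rewrite implyTb mxE -expr2 sqrf_eq0 => /eqP.
Qed.

Lemma sqnorm_eq0m (R : realFieldType) k (x : 'rV[R]_k) : x *m x^T = 0 -> x = 0.
Proof. by move=> h; apply: sqnorm_eq0; rewrite h mxE. Qed.

Lemma orth0 (R : realFieldType) n k (W : 'M[R]_(k, n)) (y : 'rV_n) :
  (y <= W)%MS -> (forall w : 'rV_n, (w <= W)%MS -> y *m w^T = 0) -> y = 0.
Proof. by move=> yW H; apply: sqnorm_eq0m; apply: H. Qed.

Lemma proj_exists_aux (R : realFieldType) r n (B : 'M[R]_(r, n)) :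
  row_free B ->
  exists P : 'M_n, [/\ P^T = P, forall x : 'rV_n, (x *m P <= B)%MS,
    forall x : 'rV_n, (x <= B)%MS -> x *m P = x &
    forall x w : 'rV_n, (w <= B)%MS -> (x - x *m P) *m w^T = 0].
Proof.
move=> Bfree; pose G := B *m B^T.
have Gfree : row_free G.
  have K0 : kermx G = 0.
    apply/row_matrixP => i; rewrite row0.
    have h : row i (kermx G) *m G = 0 by rewrite -row_mul mulmx_ker row0.
    have h2 : (row i (kermx G) *m B) *m (row i (kermx G) *m B)^T = 0.
      by rewrite trmx_mul mulmxA -(mulmxA _ B) h mul0mx.
    by apply/eqP; rewrite -(mulmx_free_eq0 _ Bfree) (sqnorm_eq0m h2).
  have := mxrank_ker G; rewrite K0 mxrank0 => /esym/eqP; rewrite subn_eq0 => h.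
  by rewrite /row_free eqn_leq h rank_leq_row.
have Gu : G \in unitmx by rewrite -row_free_unit.
have GT : G^T = G by rewrite /G trmx_mul trmxK.
exists (B^T *m invmx G *m B); split.
- by rewrite !trmx_mul trmxK trmx_inv GT mulmxA.
- by move=> x; rewrite mulmxA; apply: submxMl.
- move=> x /submxP [D ->].
  by rewrite !mulmxA -(mulmxA D B) -/G (mulmxK Gu).
move=> x w /submxP [D ->].
rewrite trmx_mul mulmxA mulmxBl !mulmxA -(mulmxA _ B B^T) -/G.
by rewrite (mulmxKV Gu) subrr mul0mx.
Qed.

Lemma proj_exists (R : realFieldType) n (W : 'M[R]_n) :
  exists P : 'M_n, [/\ P^T = P, forall x : 'rV_n, (x *m P <= W)%MS,
    forall x : 'rV_n, (x <= W)%MS -> x *m P = x &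
    forall x w : 'rV_n, (w <= W)%MS -> (x - x *m P) *m w^T = 0].
Proof.
have [P [P1 P2 P3 P4]] := proj_exists_aux (row_base_free W).
exists P; split => //.
- by move=> x; rewrite -(eq_row_base W).
- by move=> x; rewrite -(eq_row_base W); apply: P3.
- by move=> x w; rewrite -(eq_row_base W); apply: P4.
Qed.

Lemma proj_comm (R : realFieldType) n (W P M : 'M[R]_n) :
  (forall x : 'rV_n, (x *m P <= W)%MS) ->
  (forall x : 'rV_n, (x <= W)%MS -> x *m P = x) ->
  (forall x w : 'rV_n, (w <= W)%MS -> (x - x *m P) *m w^T = 0) ->
  (W *m M <= W)%MS -> (W *m M^T <= W)%MS -> P *m M = M *m P.
Proof.
move=> P1 P2 P3 WM WMT.
suff H : forall x : 'rV_n, x *m P *m M = x *m M *m P.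
  apply/row_matrixP => i.
  by rewrite -[P *m M]mul1mx -[M *m P]mul1mx !mulmxA !row_mul H.
move=> x; apply/eqP; rewrite -subr_eq0; apply/eqP.
apply: (orth0 (W := W)).
  rewrite addmx_sub // ?eqmx_opp ?P1 //.
  by apply: submx_trans WM; apply: submxMr.
move=> w wW.
have -> : x *m P *m M - x *m M *m P = (x *m M - x *m M *m P) - (x - x *m P) *m M.
  rewrite mulmxBl opprB addrA; set a := x *m P *m M; set b := x *m M *m P; set c := x *m M.
  by rewrite addrAC [c - b - c]addrAC subrr add0r addrC.
rewrite mulmxBl P3 // -mulmxA -(trmxK M) -trmx_mul P3 ?subr0 //.
by apply: submx_trans WMT; apply: submxMr.
Qed.
Lemma sym_eig (R : rcfType) k (T : 'M[R]_k.+1) : T^T = T ->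
  exists c : R, exists2 x : 'rV_k.+1, x != 0 & x *m T = c *: x.
Proof.
move=> Tsym.
pose Tc := map_mx (real_complex R) T.
have : size (char_poly Tc) != 1 by rewrite size_char_poly.
move=> /closed_rootP [a ra].
have /eigenvalueP [v vT vn0] : eigenvalue Tc a by rewrite eigenvalue_root_char.
have ReD : forall u w : R[i], complex.Re (u + w) = complex.Re u + complex.Re w by move=> [? ?] [? ?].
have ImD : forall u w : R[i], complex.Im (u + w) = complex.Im u + complex.Im w by move=> [? ?] [? ?].
have ReM : forall u w : R[i], complex.Re (u * w) = complex.Re u * complex.Re w - complex.Im u * complex.Im w by move=> [? ?] [? ?].
have ImM : forall u w : R[i], complex.Im (u * w) = complex.Re u * complex.Im w + complex.Im u * complex.Re w by move=> [? ?] [? ?].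
pose x := map_mx (@complex.Re R) v; pose y := map_mx (@complex.Im R) v.
have ex : x *m T = complex.Re a *: x - complex.Im a *: y.
  apply/rowP => j; move/rowP: vT => /(_ j); rewrite !mxE => /(congr1 (@complex.Re R)).
  rewrite (big_morph (@complex.Re R) ReD (erefl _)) ReM => <-.
  apply: eq_bigr => i _; rewrite !mxE ReM /=.
  by rewrite mulr0 subr0.
have ey : y *m T = complex.Im a *: x + complex.Re a *: y.
  apply/rowP => j; move/rowP: vT => /(_ j); rewrite !mxE => /(congr1 (@complex.Im R)).
  rewrite (big_morph (@complex.Im R) ImD (erefl _)) ImM addrC => <-.
  apply: eq_bigr => i _; rewrite !mxE ImM /=.
  by rewrite mulr0 add0r.
have sxy : (x *m T *m y^T) 0 0 = (y *m T *m x^T) 0 0.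
  have E1 : (x *m T *m y^T) 0 0 = ((x *m T *m y^T)^T) 0 0.
   by rewrite [RHS]mxE. rewrite E1.
  by rewrite !trmx_mul trmxK Tsym mulmxA.
have sxy2 : (x *m y^T) 0 0 = (y *m x^T) 0 0.
  have E1 : (x *m y^T) 0 0 = ((x *m y^T)^T) 0 0 by rewrite [RHS]mxE.
  by rewrite E1 trmx_mul trmxK.
have nn : forall z : 'rV[R]_k.+1, 0 <= (z *m z^T) 0 0.
  move=> z; rewrite mxE; apply: sumr_ge0 => i _; rewrite mxE -expr2; exact: sqr_ge0.
have vE : v = 0 -> False by move/eqP; rewrite (negPf vn0).
have xy0 : x = 0 -> y = 0 -> False.
  move=> x0 y0; apply: vE; apply/rowP => j.
  move/rowP: x0 => /(_ j); move/rowP: y0 => /(_ j).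
  rewrite !mxE; case: (v 0 j) => ? ? /= -> ->; reflexivity.
have b0 : complex.Im a = 0.
  move: sxy; rewrite ex ey mulmxBl mulmxDl -!scalemxAl.
  move: sxy2; rewrite !mxE => sxy2; rewrite sxy2 => E.
  have : complex.Im a * ((x *m x^T) 0 0 + (y *m y^T) 0 0) = 0.
    by move: E; rewrite !mxE mulrDr; lra.
  move/eqP; rewrite mulf_eq0 => /orP [/eqP //|].
  rewrite paddr_eq0 ?nn // => /andP [/eqP /sqnorm_eq0 x0 /eqP /sqnorm_eq0 y0].
  by case: (xy0 x0 y0).
move: ex ey; rewrite b0 !scale0r subr0 add0r => ex ey.
exists (complex.Re a).
have [x0|xn0] := eqVneq x 0; last by exists x.
have [y0|yn0] := eqVneq y 0; last by exists y.
by case: (xy0 x0 y0).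
Qed.

Lemma sym_eig0 (R : rcfType) n (T : 'M[R]_n) : (0 < n)%N -> T^T = T ->
  exists c : R, exists2 x : 'rV_n, x != 0 & x *m T = c *: x.
Proof. by case: n T => // k T _; exact: sym_eig. Qed.

Lemma comm_mul (R : pzRingType) n (X A B : 'M[R]_n) :
  X *m A = A *m X -> X *m B = B *m X -> X *m (A *m B) = (A *m B) *m X.
Proof. by move=> hA hB; rewrite mulmxA hA -!mulmxA hB. Qed.

Theorem theorem4p7 (R : realType) (m n : nat) (Jb : 'I_m -> 'M[R]_n)
  (hC : clifford_module Jb) (hirr : irreducible_C_module Jb)
  (W : 'M[R]_n) (hW : Cplus_submodule Jb W)
  (hne0 : (0 < \rank W)%N) (hneV : (\rank W < n)%N) :
  lagrangian Jb W.
Proof.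
have [n0 irr] := hirr.
have Jsq z : Jz Jb z *m Jz Jb z = - ((z *m z^T) 0 0)%:M by case: (hC z).
have JT z : (Jz Jb z)^T = - Jz Jb z by case: (hC z).
destruct m as [|m].
  exfalso.
  have Csub : C_submodule Jb W by move=> z; rewrite /Jz big_ord0 mulmx0 sub0mx.
  by case: (irr W Csub) => h; move: hne0 hneV; rewrite h ?ltnn.
pose e : 'rV[R]_m.+1 := delta_mx 0 0.
have ee : (e *m e^T) 0 0 = 1 by rewrite trmx_delta mul_delta_mx mxE !eqxx.
pose J1 := Jz Jb e.
have J11 : J1 *m J1 = - 1%:M by rewrite /J1 Jsq ee.
have J1T : J1^T = - J1 := JT e.
have J1TJ1 : J1^T *m J1 = 1%:M by rewrite J1T mulNmx J11 opprK.
have J1J1T : J1 *m J1^T = 1%:M by rewrite J1T mulmxN J11 opprK.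
have hW' z w : (W *m Jz Jb z *m Jz Jb w <= W)%MS by rewrite -mulmxA; exact: hW.
have WJ z : (W *m Jz Jb z <= W *m J1)%MS.
  have -> : W *m Jz Jb z = W *m Jz Jb z *m J1 *m J1^T by rewrite -!mulmxA J1J1T mulmx1.
  by rewrite J1T mulmxN eqmx_opp; exact: submxMr (hW' z e).
have JW z : (W *m J1 *m Jz Jb z <= W)%MS := hW' e z.
pose S := (W + W *m J1)%MS.
have rS : \rank S = n.
  have CS : C_submodule Jb S.
    move=> z; rewrite addsmxMr addsmx_sub; apply/andP; split.
      by apply: submx_trans (WJ z) _; exact: addsmxSr.
    by apply: submx_trans (JW z) _; exact: addsmxSl.
  case: (irr S CS) => // h.
  have := mxrankS (addsmxSl W (W *m J1)); rewrite -/S h leqn0 => /eqP h0.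
  by rewrite h0 in hne0.
pose I := (W :&: W *m J1)%MS.
have I0 : I = 0.
  have CI : C_submodule Jb I.
    move=> z; rewrite sub_capmx; apply/andP; split.
      exact: submx_trans (submxMr _ (capmxSr _ _)) (JW z).
    exact: submx_trans (submxMr _ (capmxSl _ _)) (WJ z).
  case: (irr I CI) => h; first by apply/eqP; rewrite -mxrank_eq0 h.
  exfalso; have := mxrankS (capmxSl W (W *m J1)); rewrite -/I h => h'.
  by move: hneV; rewrite ltnNge h'.
have J1u : row_free J1 by rewrite row_free_unit; case: (mulmx1_unit J1J1T).
have rWJ : \rank (W *m J1) = \rank W := mxrankMfree _ J1u.
have rank2 : (\rank W).*2 = n.
  have h := mxrank_sum_cap W (W *m J1); rewrite -/S -/I I0 mxrank0 addn0 rWJ addnn in h.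
  by rewrite -h.
split; last exact: rank2.
have [P [PT P1 P2 P3]] := proj_exists W.
have PC z w : P *m (Jz Jb z *m Jz Jb w) = (Jz Jb z *m Jz Jb w) *m P.
  apply: proj_comm P1 P2 P3 _ _; first by rewrite mulmxA; exact: hW' z w.
  by rewrite trmx_mul !JT mulmxN mulNmx opprK mulmxA; exact: hW' w z.
pose Q := J1^T *m P *m J1.
pose psi := P + Q - 1%:M.
have psiJ z : psi *m Jz Jb z = Jz Jb z *m psi.
  have Jz_eq : Jz Jb z = (Jz Jb z *m J1) *m (- J1) by rewrite -J1T -mulmxA J1J1T mulmx1.
  have PJ1 : P *m J1 = J1 *m Q by rewrite /Q !mulmxA J1J1T mul1mx.
  have QJ1 : Q *m J1 = J1 *m P.
    by rewrite /Q -!mulmxA J11 !mulmxN !mulmx1 J1T mulNmx opprK.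
  have QJJ : Q *m (Jz Jb z *m J1) = (Jz Jb z *m J1) *m Q.
    have e1 : Q *m (Jz Jb z *m J1) = J1^T *m (P *m (J1 *m Jz Jb z)) *m J1.
      by rewrite /Q !mulmxA.
    rewrite e1 PC !mulmxA J1TJ1 mul1mx.
    by rewrite -(mulmxA (Jz Jb z) J1 J1^T) J1J1T mulmx1.
  have PJJ : P *m (Jz Jb z *m J1) = (Jz Jb z *m J1) *m P := PC z e.
  rewrite Jz_eq; apply: comm_mul.
    by rewrite /psi mulmxBl mulmxDl PJJ QJJ mul1mx mulmxBr mulmxDr mulmx1.
  rewrite /psi !mulmxN !mulNmx mulmxBl mulmxDl PJ1 QJ1 mul1mx mulmxBr mulmxDr mulmx1.
  by rewrite [J1 *m Q + _]addrC.
have psiT : psi^T = psi.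
  rewrite /psi raddfB raddfD /= trmx1 PT /Q !trmx_mul trmxK PT.
  by rewrite mulmxA.
have [c [x xn0 xpsi]] := sym_eig0 n0 psiT.
have Zc : psi = c%:M.
  pose Z := psi - c%:M.
  have CZ : C_submodule Jb Z.
    move=> z; have -> : Z *m Jz Jb z = Jz Jb z *m Z.
      by rewrite /Z mulmxBl mulmxBr psiJ scalar_mxC.
    exact: submxMl.
  case: (irr Z CZ) => h.
    by apply/eqP; rewrite -subr_eq0; apply/eqP; apply/eqP; rewrite -mxrank_eq0 h.
  exfalso.
  have Zf : row_free Z by rewrite /row_free h.
  have : x *m Z == 0 by rewrite /Z mulmxBr xpsi mul_mx_scalar subrr.
  by rewrite (mulmx_free_eq0 _ Zf) (negPf xn0).
have Wn0 : W != 0 by rewrite -mxrank_eq0 -lt0n.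
have [i wn0] : exists i, row i W != 0.
  case: (pickP (fun i => row i W != 0)) => [i wi|H]; first by exists i.
  exfalso; move/negP: Wn0; apply; apply/eqP/row_matrixP => i.
  by rewrite row0; move/negbFE: (H i) => /eqP.
set w := row i W in wn0.
have wW : (w <= W)%MS := row_sub i W.
have c0 : c = 0.
  have wpsi : w *m psi = w *m Q.
    by rewrite /psi mulmxBr mulmxDr P2 // mulmx1 addrAC subrr add0r.
  have wQ : (w *m Q <= W *m J1)%MS by rewrite /Q !mulmxA submxMr // P1.
  have : (c *: w <= I)%MS.
    rewrite sub_capmx scalemx_sub //= -mul_mx_scalar -Zc wpsi wQ.
    by [].
  rewrite I0 submx0 scaler_eq0 (negPf wn0) orbF => /eqP //.
have PQ1 : P + Q = 1%:M.
  by apply/eqP; rewrite -subr_eq0; apply/eqP; rewrite -/psi Zc c0 -scalemx1 scale0r.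
have aP (u : 'rV_n) : (u <= W)%MS -> u *m J1 *m P = 0.
  move=> uW; have : u *m J1 *m (P + Q) = u *m J1 by rewrite PQ1 mulmx1.
  rewrite mulmxDr /Q !mulmxA -(mulmxA u J1 J1^T) J1J1T mulmx1 (P2 u uW).
  by move/(congr1 (fun X => X - u *m J1)); rewrite addrK subrr.
move=> u v uW vW z.
have := submx_trans (submxMr (Jz Jb z) uW) (WJ z).
case/submxP => D ->.
by rewrite -(P2 v vW) trmx_mul PT !mulmxA aP ?submxMl // mul0mx mxE.
Qed.
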